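(* For any $0\leq p_0\leq p_1\leq 1$ and $\alpha\in[0,1]$, \[ h_2(\alpha p_0+(1-\alpha)p_1)-\alpha h_2(p_0)-(1-\alpha)h_2(p_1)\leq \min\left\{p_1-p_0,\ \frac{(p_1-p_0)^2}{2\min\{p_0,1-p_1\}}\right\}. \]
   Context: $h_2(p)=-p\log p-(1-p)\log(1-p)$ is the binary entropy function with natural logarithm. *)

(* Defs.v *)
From Stdlib Require Import Reals Lra.
Open Scope R_scope.

(* x ln x with the convention 0 ln 0 = 0 (natural logarithm). *)
Definition xlnx (x : R) : R := if Req_EM_T x 0 then 0 else x * ln x.

(* Binary entropy with natural logarithm. *)
Definition h2 (p : R) : R := - xlnx p - xlnx (1 - p).

(* Right-hand side min{p1-p0, (p1-p0)^2/(2 min{p0,1-p1})}, where the second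
   term is read as +infinity when min{p0,1-p1} = 0. *)
Definition lemma2_bound (p0 p1 : R) : R :=
  let m := Rmin p0 (1 - p1) in
  if Req_EM_T m 0 then p1 - p0
  else Rmin (p1 - p0) ((p1 - p0) ^ 2 / (2 * m)).

(* Main.v *)
Require Import Defs.
From Stdlib Require Import Reals.
From Stdlib Require Import Lra Psatz.
Open Scope R_scope.

Lemma ln_le_sub1 (y : R) : 0 < y -> ln y <= y - 1.
Proof. intro H. pose proof (exp_ineq1_le (ln y)). rewrite exp_ln in H0; lra. Qed.

Lemma term_bound (a q : R) : 0 <= a -> 0 < q -> xlnx a - a * ln q <= a * a / q - a.
Proof.
  intros Ha Hq. unfold xlnx. destruct (Req_EM_T a 0) as [e|n].
  - subst. unfold Rdiv. lra.
  - assert (Ha' : 0 < a) by lra.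
    assert (E : a * ln a - a * ln q = a * ln (a / q)).
    { unfold Rdiv. rewrite ln_mult; [|lra|apply Rinv_0_lt_compat; lra].
      rewrite ln_Rinv; lra. }
    rewrite E.
    assert (L : ln (a / q) <= a / q - 1) by (apply ln_le_sub1; apply Rdiv_lt_0_compat; lra).
    apply Rle_trans with (a * (a / q - 1)).
    + apply Rmult_le_compat_l; lra.
    + right. field. lra.
Qed.

Lemma xlnx_0 : xlnx 0 = 0.
Proof. unfold xlnx. destruct (Req_EM_T 0 0); lra. Qed.

Lemma xlnx_pos (x : R) : 0 < x -> xlnx x = x * ln x.
Proof. intro H. unfold xlnx. destruct (Req_EM_T x 0); lra. Qed.

Lemma bound_nonneg (p0 p1 : R) : 0 <= p0 -> p0 <= p1 -> p1 <= 1 -> 0 <= lemma2_bound p0 p1.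
Proof.
  intros. unfold lemma2_bound. destruct (Req_EM_T _ 0) as [e|n]; [lra|].
  assert (0 <= Rmin p0 (1 - p1)) by (apply Rmin_glb; lra).
  apply Rmin_glb; [lra|]. apply Rmult_le_pos; [apply pow2_ge_0|].
  left; apply Rinv_0_lt_compat; lra.
Qed.

Lemma div_le (X K Y : R) : 0 < K -> X <= Y * K -> X / K <= Y.
Proof.
  intros HK H. apply Rmult_le_reg_r with K; auto.
  replace (X / K * K) with X by (field; lra). lra.
Qed.

Lemma div_le2 (X K Y M : R) : 0 < K -> 0 < M -> X * M <= Y * K -> X / K <= Y / M.
Proof.
  intros HK HM H. apply div_le; auto.
  replace (Y / M * K) with ((Y * K) / M) by (field; lra).
  apply Rmult_le_reg_r with M; auto.
  replace (Y * K / M * M) with (Y * K) by (field; lra). lra.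
Qed.

Theorem lemma2 (p0 p1 alpha : R) :
  0 <= p0 -> p0 <= p1 -> p1 <= 1 -> 0 <= alpha <= 1 ->
  h2 (alpha * p0 + (1 - alpha) * p1) - alpha * h2 p0 - (1 - alpha) * h2 p1
  <= lemma2_bound p0 p1.
Proof.
  intros H0 H01 H1 [Ha0 Ha1].
  pose proof (bound_nonneg p0 p1 H0 H01 H1) as Hb.
  destruct (Req_EM_T alpha 0) as [ea|na].
  { subst. replace (0 * p0 + (1 - 0) * p1) with p1 by ring. lra. }
  destruct (Req_EM_T alpha 1) as [ea|na1].
  { subst. replace (1 * p0 + (1 - 1) * p1) with p0 by ring. lra. }
  destruct (Req_EM_T p0 p1) as [ep|np].
  { subst. replace (alpha * p1 + (1 - alpha) * p1) with p1 by ring. lra. }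
  set (d := p1 - p0).
  set (q := alpha * p0 + (1 - alpha) * p1).
  assert (Hq0 : 0 < q) by (unfold q; nra).
  assert (Hq1 : 0 < 1 - q) by (unfold q; nra).
  assert (HK : 0 < q * (1 - q)) by nra.
  assert (Hle : h2 q - alpha * h2 p0 - (1 - alpha) * h2 p1
    <= alpha * (1 - alpha) * (d * d) / (q * (1 - q))).
  { pose proof (term_bound p0 q H0 Hq0) as T1.
    pose proof (term_bound p1 q ltac:(lra) Hq0) as T2.
    pose proof (term_bound (1 - p0) (1 - q) ltac:(lra) Hq1) as T3.
    pose proof (term_bound (1 - p1) (1 - q) ltac:(lra) Hq1) as T4.
    assert (E : h2 q - alpha * h2 p0 - (1 - alpha) * h2 p1 =
      alpha * ((xlnx p0 - p0 * ln q) + (xlnx (1 - p0) - (1 - p0) * ln (1 - q)))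
      + (1 - alpha) * ((xlnx p1 - p1 * ln q) + (xlnx (1 - p1) - (1 - p1) * ln (1 - q)))).
    { unfold h2. rewrite (xlnx_pos q Hq0), (xlnx_pos (1 - q) Hq1).
      unfold q at 1 3. ring. }
    rewrite E.
    apply Rle_trans with (alpha * ((p0 * p0 / q - p0) + ((1 - p0) * (1 - p0) / (1 - q) - (1 - p0)))
      + (1 - alpha) * ((p1 * p1 / q - p1) + ((1 - p1) * (1 - p1) / (1 - q) - (1 - p1)))).
    { apply Rplus_le_compat; apply Rmult_le_compat_l; lra. }
    right. unfold d, q in *. field. lra. }
  eapply Rle_trans; [exact Hle|].
  assert (Hd : 0 < d) by (unfold d; lra).
  assert (Key : alpha * (1 - alpha) * d <= q * (1 - q)).
  { assert (I : q * (1 - q) - alpha * (1 - alpha) * d =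
      p0 * (1 - p1) + alpha * alpha * p0 * d + (1 - alpha) * (1 - alpha) * d * (1 - p1))
      by (unfold q, d; ring).
    assert (0 <= p0 * (1 - p1)) by nra.
    assert (0 <= alpha * alpha * p0 * d) by (apply Rmult_le_pos; [apply Rmult_le_pos; nra | lra]).
    assert (0 <= (1 - alpha) * (1 - alpha) * d * (1 - p1)) by (apply Rmult_le_pos; [apply Rmult_le_pos; nra | lra]).
    lra. }
  assert (B1 : alpha * (1 - alpha) * (d * d) / (q * (1 - q)) <= d).
  { apply div_le; auto. nra. }
  unfold lemma2_bound. fold d.
  destruct (Req_EM_T _ 0) as [e|n]; [exact B1|].
  set (m := Rmin p0 (1 - p1)) in *.
  assert (Hm0 : 0 < m) by (assert (0 <= m) by (apply Rmin_glb; lra); lra).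
  assert (Hmq : m <= q) by (apply Rle_trans with p0; [apply Rmin_l| unfold q; nra]).
  assert (Hmq' : m <= 1 - q) by (apply Rle_trans with (1 - p1); [apply Rmin_r| unfold q; nra]).
  apply Rmin_glb; [exact B1|].
  replace ((d) ^ 2) with (d * d) by ring.
  apply div_le2; [auto| lra |].
  assert (A : 2 * alpha * (1 - alpha) * m <= q * (1 - q)).
  { assert (Ha : alpha * (1 - alpha) <= 1/4).
    { pose proof (Rle_0_sqr (2 * alpha - 1)) as S. unfold Rsqr in S. lra. }
    assert (Hm2 : 2 * alpha * (1 - alpha) * m <= m * (1/2)).
    { replace (2 * alpha * (1 - alpha) * m) with (m * (2 * (alpha * (1 - alpha)))) by ring.
      apply Rmult_le_compat_l; lra. }
    destruct (Rle_dec q (1/2)).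
    - assert (q * (1 - q) >= m * (1/2)).
      { apply Rle_ge. apply Rmult_le_compat; lra. }
      lra.
    - assert (q * (1 - q) >= m * (1/2)).
      { apply Rle_ge. rewrite Rmult_comm. apply Rmult_le_compat; lra. }
      lra. }
  assert (0 <= d * d) by nra. nra.
Qed.
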